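(* Let $\mathcal{H}=(V,\mathcal{A})$ be a multi-head HyTN that contains a negative cycle. Then $\mathcal{H}$ admits no feasible scheduling.
   Context: A multi-head HyTN is a pair $\mathcal{H}=(V,\mathcal{A})$, $V$ a finite node set, $\mathcal{A}$ a finite set of hyperarcs $A=(t_A,H_A,w_A)$ with tail $t_A\in V$, nonempty head set $H_A\subseteq V\setminus\{t_A\}$ and weights $w_A(v)\in\mathbb{R}$ for $v\in H_A$. A scheduling $s:V\to\mathbb{R}$ is feasible if $s(t_A)\ge\min_{v\in H_A}\{s(v)-w_A(v)\}$ for all $A\in\mathcal{A}$. A cycle is a pair $(S,\mathcal{C})$ with $S\subseteq V$, $\mathcal{C}\subseteq\mathcal{A}$, such that $S=\bigcup_{A\in\mathcal{C}}(H_A\cup\{t_A\})\neq\emptyset$ and for every $v\in S$ there is a unique $A\in\mathcal{C}$ with $t_A=v$, denoted $a(v)$. A finite cyclic sequence of the cycle is a sequence $v_1,\ldots,v_p$ of nodes of $S$ with $v_{t+1}\in H_{a(v_t)}$ for $1\le t<p$, $v_p=v_1$, and no other repeated node. The cycle is negative if every finite cyclic sequence $v_1,\ldots,v_p$ satisfies $\sum_{t=1}^{p-1}w_{a(v_t)}(v_{t+1})<0$. *)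

(* Defs.v *)
From HB Require Import structures.
From mathcomp Require Import all_boot all_order all_algebra.
Set Implicit Arguments. Unset Strict Implicit. Unset Printing Implicit Defensive.
Import Order.TTheory GRing.Theory Num.Theory.
Local Open Scope ring_scope.

(* A multi-head HyTN over a finite node type V: the hyperarcs are indexed by a
   finite type I; hyperarc A has tail [tail A], head set [head A] and weights
   [weight A v] (only meaningful for v in head A). *)
Record HyTN (V I : finType) (R : realFieldType) := MkHyTN {
  tail : I -> V;
  head : I -> {set V};
  weight : I -> V -> R }.

Definition wf_HyTN (V I : finType) (R : realFieldType) (H : HyTN V I R) : Prop :=
  forall A : I, head H A != set0 /\ tail H A \notin head H A.

(* s(t_A) >= min_{v in H_A} (s v - w_A v); since H_A is finite and nonempty,
   this is: some v in H_A achieves s v - w_A v <= s t_A. *)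
Definition feasible (V I : finType) (R : realFieldType) (H : HyTN V I R)
  (s : V -> R) : Prop :=
  forall A : I, exists2 v, v \in head H A & s v - weight H A v <= s (tail H A).

Definition is_cycle (V I : finType) (R : realFieldType) (H : HyTN V I R)
  (S : {set V}) (C : {set I}) : Prop :=
  S = \bigcup_(A in C) (tail H A |: head H A) /\ S != set0 /\
  (forall v, v \in S -> exists! A, A \in C /\ tail H A = v).

Definition cycle_arc_map (V I : finType) (R : realFieldType) (H : HyTN V I R)
  (S : {set V}) (C : {set I}) (a : V -> I) : Prop :=
  forall v, v \in S -> a v \in C /\ tail H (a v) = v.

(* A finite cyclic sequence v_1, ..., v_p (v_p = v_1, p >= 2) is represented by the
   duplicate-free nonempty list l = [v_1; ...; v_{p-1}] of nodes of S; the
   successor of v_t is [next l v_t] (cyclically), and we need v_{t+1} in H_{a(v_t)}. *)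
Definition cyclic_sequence (V I : finType) (R : realFieldType) (H : HyTN V I R)
  (S : {set V}) (a : V -> I) (l : seq V) : Prop :=
  l != [::] /\ uniq l /\ {subset l <= S} /\
  (forall v, v \in l -> next l v \in head H (a v)).

Definition cycle_weight (V I : finType) (R : realFieldType) (H : HyTN V I R)
  (a : V -> I) (l : seq V) : R :=
  \sum_(v <- l) weight H (a v) (next l v).

Definition negative_cycle (V I : finType) (R : realFieldType) (H : HyTN V I R)
  (S : {set V}) (C : {set I}) : Prop :=
  is_cycle H S C /\
  forall (a : V -> I), cycle_arc_map H S C a ->
  forall l : seq V, cyclic_sequence H S a l -> cycle_weight H a l < 0.

Definition has_negative_cycle (V I : finType) (R : realFieldType) (H : HyTN V I R)
  : Prop := exists S C, negative_cycle H S C.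

(* Main.v *)
Require Import Defs.
From mathcomp Require Import all_boot all_order all_algebra.
Set Implicit Arguments. Unset Strict Implicit. Unset Printing Implicit Defensive.
Import Order.TTheory GRing.Theory Num.Theory.

Lemma sum_next_tele (V : finType) (R : realFieldType) (s : V -> R) (l : seq V) :
  uniq l -> (\sum_(v <- l) (s (next l v) - s v) = 0)%R.
Proof.
move=> Ul; rewrite GRing.sumrB.
have -> : (\sum_(v <- l) s (next l v) = \sum_(v <- map (next l) l) s v)%R
  by rewrite big_map.
suff Hp : perm_eq (map (next l) l) l by rewrite (perm_big _ Hp) GRing.subrr.
apply: uniq_perm => //.
  rewrite map_inj_in_uniq // => x y _ _ /(congr1 (prev l)).
  by rewrite !prev_next.
move=> y; apply/mapP/idP => [[x xl ->]|yl]; first by rewrite mem_next.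
by exists (prev l y); rewrite ?mem_prev ?next_prev.
Qed.

Lemma ler_sum_in (R : realFieldType) (T : eqType) (r : seq T) (F G : T -> R) :
  (forall v, v \in r -> F v <= G v)%R ->
  (\sum_(v <- r) F v <= \sum_(v <- r) G v)%R.
Proof.
elim: r => [|y r IH] h; first by rewrite !big_nil.
rewrite !big_cons; apply: lerD; first by apply: h; rewrite mem_head.
by apply: IH => v vr; apply: h; rewrite inE vr orbT.
Qed.

Theorem mainTheorem4 (V I : finType) (R : realFieldType) (H : HyTN V I R) :
  wf_HyTN H -> has_negative_cycle H -> ~ (exists s : V -> R, feasible H s).
Proof.
move=> wf [S [C [[defS [S0 uniqA]] neg]]] [s feas].
have [v0 v0S] : exists v0, v0 \in S by case/set0Pn: S0 => v ?; exists v.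
have [A0 _] := uniqA v0 v0S.
pose a v := odflt A0 [pick A in C | tail H A == v].
have amap : cycle_arc_map H S C a.
  move=> v vS; rewrite /a; case: pickP => [A /andP[AC /eqP tA]|N] //=.
  have [A [[AC tA] _]] := uniqA v vS.
  by have := N A; rewrite AC tA eqxx.
pose f v := odflt v [pick w in Defs.head H (a v) |
   (s w - weight H (a v) w <= s (tail H (a v)))%R].
have fP v : f v \in Defs.head H (a v) /\
   (s (f v) - weight H (a v) (f v) <= s (tail H (a v)))%R.
  rewrite /f; case: pickP => [w /andP[wh ww]|N] //=.
  have [w wh ww] := feas (a v).
  by have := N w; rewrite wh ww.
have fS v : v \in S -> f v \in S.
  move=> vS; have [aC _] := amap v vS; rewrite defS.
  by apply/bigcupP; exists (a v) => //; rewrite in_setU1 (proj1 (fP v)) orbT.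
have iterS n u : u \in S -> iter n f u \in S.
  by move=> uS; elim: n => //= n IH; apply: fS.
have [i ilt eqi] : exists2 i, i < order f v0 & iter (order f v0) f v0 = iter i f v0.
  have /loopingP/(_ (order f v0)) := looping_order f v0.
  by move=> /trajectP[i ilt ->]; exists i.
pose x := iter i f v0.
have xS : x \in S by apply: iterS.
have cyc : fcycle f (orbit f x).
  have Hk : iter (order f v0 - i).-1.+1 f x = x.
    rewrite prednK ?subn_gt0 // /x -iterD subnK ?(ltnW ilt) //.
  exact: (all_iffLR (@orbitPcycle V f x) 3 0 (ex_intro _ _ Hk)).
have lS : {subset orbit f x <= S}.
  by move=> y; rewrite -fconnect_orbit => /iter_findex <-; apply: iterS.
have Hneg : (cycle_weight H a (orbit f x) < 0)%R.
  apply: neg amap _ _.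
  split; first by apply/eqP => E; have := in_orbit f x; rewrite E.
  split; first exact: orbit_uniq.
  split=> // v vl; rewrite (nextE cyc vl); exact: (proj1 (fP v)).
suff : (0 <= cycle_weight H a (orbit f x))%R by rewrite leNgt Hneg.
rewrite /cycle_weight -{1}(sum_next_tele s (orbit_uniq f x)).
apply: ler_sum_in => v vl.
have [_ ta] := amap v (lS v vl).
have [_ ineq] := fP v.
rewrite (nextE cyc vl).
rewrite ta in ineq.
rewrite lerBlDr addrC -lerBlDr.
exact: ineq.
Qed.
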